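(* Let $q$ be a nonzero complex number with $q^4\ne 1$, and let $\zeta,\kappa,\zeta',\kappa'$ be nonzero complex numbers with $\zeta,\zeta'\neq\pm1$ and $\kappa^4\neq1$, $(\kappa')^4\ne1$. Then the space of $U_q(\mathfrak{gl}(1|1))$-module homomorphisms $V(\zeta,\kappa)\otimes V(\zeta',\kappa')\to V(\zeta',\kappa')\otimes V(\zeta,\kappa)$ is two-dimensional, spanned by the maps $R=R_{\zeta,\zeta'}$ and $R'=R'_{\zeta,\zeta'}$ defined by \[\phi(x\otimes x')=a_2\,x'\otimes x,\ \phi(x\otimes y')=c_2\,x'\otimes y+b_2\,y'\otimes x,\ \phi(y\otimes x')=b_1\,x'\otimes y+c_1\,y'\otimes x,\ \phi(y\otimes y')=a_1\,y'\otimes y\] with \[\begin{array}{c|cccccc} & a_1 & a_2 & b_1 & b_2 & c_1 & c_2\\\hline R & -\zeta\zeta' & 1 & \zeta' & \zeta & 1-\zeta^2 & 0\\ R' & 1 & -\zeta\zeta' & -\zeta & -\zeta' & 0 & 1-(\zeta')^2\end{array}\]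
   Context: $[\zeta]=\frac{\zeta-\zeta^{-1}}{q-q^{-1}}$. $U_q(\mathfrak{gl}(1|1))$ is the associative superalgebra generated by odd $E,F$ and even invertible commuting $W^{\pm1},K^{\pm1}$ with relations $KEK^{-1}=q^2E$, $KFK^{-1}=q^{-2}F$, $W$ central, $EF+FE=\frac{W-W^{-1}}{q-q^{-1}}$, $E^2=F^2=0$, with comultiplication $\Delta(W)=W\otimes W$, $\Delta(K)=K\otimes K$, $\Delta(E)=E\otimes W^{-1}+1\otimes E$, $\Delta(F)=F\otimes1+W\otimes F$; tensor products of modules use the sign rule $(a\otimes b)(v\otimes w)=(-1)^{|b||v|}(av\otimes bw)$. $V(\zeta,\kappa)$ is the module with basis $x$ (even), $y$ (odd): $Ex=0$, $Fx=y$, $Wx=\zeta x$, $Kx=\kappa x$, $Fy=0$, $Ey=[\zeta]x$, $Wy=\zeta y$, $Ky=q^{-2}\kappa y$; $V(\zeta',\kappa')$ similarly with basis $x',y'$. *)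

(* Defs.v *)
From HB Require Import structures.
From mathcomp Require Import all_boot all_order all_algebra.
From mathcomp Require Import reals complex.
Set Implicit Arguments. Unset Strict Implicit. Unset Printing Implicit Defensive.
Import Order.TTheory GRing.Theory Num.Theory.
Local Open Scope ring_scope.

Section Gl11.
Variable C : fieldType.
Variable q : C.

Inductive gen := GE | GF | GK | GKi | GW | GWi.

Definition qbr (z : C) : C := (z - z^-1) / (q - q^-1).

(* The module V(z,k): basis index 0 = x (even), 1 = y (odd).
   Matrix convention: (rhoV z k g) i j = coefficient of e_i in g . e_j. *)
Definition mx2 (a b c d : C) : 'M[C]_2 :=
  \matrix_(i < 2, j < 2)
    (if (i : nat) == 0%N then (if (j : nat) == 0%N then a else b)
     else (if (j : nat) == 0%N then c else d)).

Definition rhoV (z k : C) (g : gen) : 'M[C]_2 :=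
  match g with
  | GE  => mx2 0 (qbr z) 0 0
  | GF  => mx2 0 0 1 0
  | GW  => mx2 z 0 0 z
  | GWi => mx2 z^-1 0 0 z^-1
  | GK  => mx2 k 0 0 (q^-2 * k)
  | GKi => mx2 k^-1 0 0 (q^+2 * k^-1)
  end.

Definition oddb (i : 'I_2) : bool := (i : nat) == 1%N.
Definition sgn (b : bool) : C := if b then -1 else 1.

(* basis of a tensor product of two 2-dim superspaces: p : 'I_4 stands for
   e_(p %/ 2) (x) f_(p %% 2), i.e. order 00, 01, 10, 11 *)
Definition tfst (p : 'I_4) : 'I_2 := inord (p %/ 2).
Definition tsnd (p : 'I_4) : 'I_2 := inord (p %% 2).

(* the operator A (x) B on the tensor product with the sign rule
   (a (x) b)(v (x) w) = (-1)^{|b||v|} (a v (x) b w); oddB = parity of B *)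
Definition stens (oddB : bool) (A B : 'M[C]_2) : 'M[C]_4 :=
  \matrix_(p < 4, r < 4)
    (sgn (oddB && oddb (tfst r)) * A (tfst p) (tfst r) * B (tsnd p) (tsnd r)).

(* action on V1 (x) V2 via the comultiplication
   D(E) = E (x) W^-1 + 1 (x) E, D(F) = F (x) 1 + W (x) F,
   D(K) = K (x) K, D(W) = W (x) W (and likewise for the inverses). *)
Definition rhoT (rho1 rho2 : gen -> 'M[C]_2) (g : gen) : 'M[C]_4 :=
  match g with
  | GE => stens false (rho1 GE) (rho2 GWi) + stens true 1%:M (rho2 GE)
  | GF => stens false (rho1 GF) 1%:M + stens true (rho1 GW) (rho2 GF)
  | g' => stens false (rho1 g') (rho2 g')
  end.

(* phi : 'M_4 (columns = images of basis vectors) is a module homomorphism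
   V(z,k) (x) V(z',k') -> V(z',k') (x) V(z,k) *)
Definition is_hom (z k z' k' : C) (phi : 'M[C]_4) : Prop :=
  forall g : gen,
    phi *m rhoT (rhoV z k) (rhoV z' k') g = rhoT (rhoV z' k') (rhoV z k) g *m phi.

(* the map phi of the paper in terms of a1 a2 b1 b2 c1 c2.
   Source basis: 0 = x(x)x', 1 = x(x)y', 2 = y(x)x', 3 = y(x)y'.
   Target basis: 0 = x'(x)x, 1 = x'(x)y, 2 = y'(x)x, 3 = y'(x)y. *)
Definition phimx (a1 a2 b1 b2 c1 c2 : C) : 'M[C]_4 :=
  \matrix_(i < 4, j < 4)
    nth 0 (nth [::] [:: [:: a2; 0; 0; 0];
                        [:: 0; c2; b1; 0];
                        [:: 0; b2; c1; 0];
                        [:: 0; 0; 0; a1]] i) j.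

Definition Rmx (z z' : C) : 'M[C]_4 := phimx (- z * z') 1 z' z (1 - z ^+ 2) 0.
Definition R'mx (z z' : C) : 'M[C]_4 := phimx 1 (- z * z') (- z) (- z') 0 (1 - z' ^+ 2).

End Gl11.

(* Main.v *)
Require Import Defs.
From HB Require Import structures.
From mathcomp Require Import all_boot all_order all_algebra.
From mathcomp Require Import reals complex.
From mathcomp Require Import ring.
Import Order.TTheory GRing.Theory Num.Theory.
Local Open Scope ring_scope.

Section Aux.
Variable C : fieldType.

Definition m4 (l : seq (seq C)) : 'M[C]_4 :=
  \matrix_(i < 4, j < 4) nth 0 (nth [::] l i) j.

Lemma tfstE (p : 'I_4) : nat_of_ord (tfst p) = (p %/ 2)%N.
Proof. by rewrite inordK // ltn_divLR //; case: p. Qed.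
Lemma tsndE (p : 'I_4) : nat_of_ord (tsnd p) = (p %% 2)%N.
Proof. by rewrite inordK // ltn_pmod. Qed.
Lemma tsnd_eq (p r : 'I_4) : (tsnd p == tsnd r) = ((p %% 2) == (r %% 2))%N.
Proof. by rewrite -val_eqE /= !tsndE. Qed.
Lemma tfst_eq (p r : 'I_4) : (tfst p == tfst r) = ((p %/ 2) == (r %/ 2))%N.
Proof. by rewrite -val_eqE /= !tfstE. Qed.
Lemma oddbE (p : 'I_4) : Defs.oddb (tfst p) = (p %/ 2 == 1)%N.
Proof. by rewrite /Defs.oddb tfstE. Qed.

Ltac rhoT_tac := apply/matrixP => -[[|[|[|[|?]]]] ?] -[[|[|[|[|?]]]] ?] //;
  rewrite !mxE ?oddbE ?tsnd_eq ?tfst_eq ?tfstE ?tsndE /=; ring.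
Ltac mul_tac := apply/matrixP => -[[|[|[|[|?]]]] ?] -[[|[|[|[|?]]]] ?] //;
  rewrite !mxE !big_ord_recr big_ord0 /= !mxE /=; ring.
Ltac inj_tac := move=> H;
  repeat split; [ match goal with |- _ => idtac end ..];
  idtac.
Lemma rhoT_GE (q z k z' k' : C) : rhoT (rhoV q z k) (rhoV q z' k') GE = m4 [:: [:: 0; ((qbr q z')); ((qbr q z) * z'^-1); 0]; [:: 0; 0; 0; ((qbr q z) * z'^-1)]; [:: 0; 0; 0; (- (qbr q z'))]; [:: 0; 0; 0; 0]].
Proof. rhoT_tac. Qed.

Lemma rhoT_GF (q z k z' k' : C) : rhoT (rhoV q z k) (rhoV q z' k') GF = m4 [:: [:: 0; 0; 0; 0]; [:: (z); 0; 0; 0]; [:: (1); 0; 0; 0]; [:: 0; (1); (- z); 0]].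
Proof. rhoT_tac. Qed.

Lemma rhoT_GK (q z k z' k' : C) : rhoT (rhoV q z k) (rhoV q z' k') GK = m4 [:: [:: (k * k'); 0; 0; 0]; [:: 0; (k * k' * q ^- 2); 0; 0]; [:: 0; 0; (k * k' * q ^- 2); 0]; [:: 0; 0; 0; (k * k' * q ^- 2 * q ^- 2)]].
Proof. rhoT_tac. Qed.

Lemma rhoT_GKi (q z k z' k' : C) : rhoT (rhoV q z k) (rhoV q z' k') GKi = m4 [:: [:: (k'^-1 * k^-1); 0; 0; 0]; [:: 0; (k'^-1 * k^-1 * q ^+ 2); 0; 0]; [:: 0; 0; (k'^-1 * k^-1 * q ^+ 2); 0]; [:: 0; 0; 0; (k'^-1 * k^-1 * q ^+ 2 * q ^+ 2)]].
Proof. rhoT_tac. Qed.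

Lemma rhoT_GW (q z k z' k' : C) : rhoT (rhoV q z k) (rhoV q z' k') GW = m4 [:: [:: (z * z'); 0; 0; 0]; [:: 0; (z * z'); 0; 0]; [:: 0; 0; (z * z'); 0]; [:: 0; 0; 0; (z * z')]].
Proof. rhoT_tac. Qed.

Lemma rhoT_GWi (q z k z' k' : C) : rhoT (rhoV q z k) (rhoV q z' k') GWi = m4 [:: [:: (z'^-1 * z^-1); 0; 0; 0]; [:: 0; (z'^-1 * z^-1); 0; 0]; [:: 0; 0; (z'^-1 * z^-1); 0]; [:: 0; 0; 0; (z'^-1 * z^-1)]].
Proof. rhoT_tac. Qed.

Lemma mulm4 (a00 a01 a02 a03 a10 a11 a12 a13 a20 a21 a22 a23 a30 a31 a32 a33 b00 b01 b02 b03 b10 b11 b12 b13 b20 b21 b22 b23 b30 b31 b32 b33 : C) :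
  m4 [:: [:: a00; a01; a02; a03]; [:: a10; a11; a12; a13]; [:: a20; a21; a22; a23]; [:: a30; a31; a32; a33]] *m m4 [:: [:: b00; b01; b02; b03]; [:: b10; b11; b12; b13]; [:: b20; b21; b22; b23]; [:: b30; b31; b32; b33]] = m4 [:: [:: (a00 * b00 + a01 * b10 + a02 * b20 + a03 * b30); (a00 * b01 + a01 * b11 + a02 * b21 + a03 * b31); (a00 * b02 + a01 * b12 + a02 * b22 + a03 * b32); (a00 * b03 + a01 * b13 + a02 * b23 + a03 * b33)]; [:: (a10 * b00 + a11 * b10 + a12 * b20 + a13 * b30); (a10 * b01 + a11 * b11 + a12 * b21 + a13 * b31); (a10 * b02 + a11 * b12 + a12 * b22 + a13 * b32); (a10 * b03 + a11 * b13 + a12 * b23 + a13 * b33)]; [:: (a20 * b00 + a21 * b10 + a22 * b20 + a23 * b30); (a20 * b01 + a21 * b11 + a22 * b21 + a23 * b31); (a20 * b02 + a21 * b12 + a22 * b22 + a23 * b32); (a20 * b03 + a21 * b13 + a22 * b23 + a23 * b33)]; [:: (a30 * b00 + a31 * b10 + a32 * b20 + a33 * b30); (a30 * b01 + a31 * b11 + a32 * b21 + a33 * b31); (a30 * b02 + a31 * b12 + a32 * b22 + a33 * b32); (a30 * b03 + a31 * b13 + a32 * b23 + a33 * b33)]].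
Proof. mul_tac. Qed.

Lemma m4_inj (a00 a01 a02 a03 a10 a11 a12 a13 a20 a21 a22 a23 a30 a31 a32 a33 b00 b01 b02 b03 b10 b11 b12 b13 b20 b21 b22 b23 b30 b31 b32 b33 : C) :
  m4 [:: [:: a00; a01; a02; a03]; [:: a10; a11; a12; a13]; [:: a20; a21; a22; a23]; [:: a30; a31; a32; a33]] = m4 [:: [:: b00; b01; b02; b03]; [:: b10; b11; b12; b13]; [:: b20; b21; b22; b23]; [:: b30; b31; b32; b33]] -> a00 = b00 /\ a01 = b01 /\ a02 = b02 /\ a03 = b03 /\ a10 = b10 /\ a11 = b11 /\ a12 = b12 /\ a13 = b13 /\ a20 = b20 /\ a21 = b21 /\ a22 = b22 /\ a23 = b23 /\ a30 = b30 /\ a31 = b31 /\ a32 = b32 /\ a33 = b33.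
Proof. move=> /matrixP H.
  move: (H (@Ordinal 4 0 isT) (@Ordinal 4 0 isT)); rewrite !mxE /= => e00.
  move: (H (@Ordinal 4 0 isT) (@Ordinal 4 1 isT)); rewrite !mxE /= => e01.
  move: (H (@Ordinal 4 0 isT) (@Ordinal 4 2 isT)); rewrite !mxE /= => e02.
  move: (H (@Ordinal 4 0 isT) (@Ordinal 4 3 isT)); rewrite !mxE /= => e03.
  move: (H (@Ordinal 4 1 isT) (@Ordinal 4 0 isT)); rewrite !mxE /= => e10.
  move: (H (@Ordinal 4 1 isT) (@Ordinal 4 1 isT)); rewrite !mxE /= => e11.
  move: (H (@Ordinal 4 1 isT) (@Ordinal 4 2 isT)); rewrite !mxE /= => e12.
  move: (H (@Ordinal 4 1 isT) (@Ordinal 4 3 isT)); rewrite !mxE /= => e13.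
  move: (H (@Ordinal 4 2 isT) (@Ordinal 4 0 isT)); rewrite !mxE /= => e20.
  move: (H (@Ordinal 4 2 isT) (@Ordinal 4 1 isT)); rewrite !mxE /= => e21.
  move: (H (@Ordinal 4 2 isT) (@Ordinal 4 2 isT)); rewrite !mxE /= => e22.
  move: (H (@Ordinal 4 2 isT) (@Ordinal 4 3 isT)); rewrite !mxE /= => e23.
  move: (H (@Ordinal 4 3 isT) (@Ordinal 4 0 isT)); rewrite !mxE /= => e30.
  move: (H (@Ordinal 4 3 isT) (@Ordinal 4 1 isT)); rewrite !mxE /= => e31.
  move: (H (@Ordinal 4 3 isT) (@Ordinal 4 2 isT)); rewrite !mxE /= => e32.
  move: (H (@Ordinal 4 3 isT) (@Ordinal 4 3 isT)); rewrite !mxE /= => e33.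
  by repeat split.
Qed.

Lemma lin_solve (x v l r c : C) : c != 0 -> l = r -> l - r = c * (x - v) -> x = v.
Proof.
move=> c0 e; rewrite e subrr => /esym /eqP; rewrite mulf_eq0 (negbTE c0) /= subr_eq0.
by move/eqP.
Qed.

Lemma wzero (x a b : C) : x * a = b * x -> a != b -> x = 0.
Proof.
move=> e nab; apply/eqP; apply: contraNT nab => x0; apply/eqP.
by apply: (mulfI x0); rewrite e mulrC.
Qed.

Lemma neqt (m t : C) : m != 0 -> t != 1 -> (m != m * t) && (m * t != m).
Proof.
move=> m0 t1; have h : m != m * t.
  apply: contra t1 => /eqP e; apply/eqP; apply: (mulfI m0); by rewrite mulr1 -e.
by rewrite h eq_sym h.
Qed.

Section Main.
Variables (q z k z' k' : C).
Hypotheses (hq0 : q != 0) (hq4 : q ^+ 4 != 1)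
  (hz0 : z != 0) (hk0 : k != 0) (hz'0 : z' != 0) (hk'0 : k' != 0)
  (hz2 : 1 - z ^+ 2 != 0) (hz'2 : 1 - z' ^+ 2 != 0).

Lemma z2 : z ^+ 2 - 1 != 0. Proof. by rewrite -opprB oppr_eq0. Qed.
Lemma z'2 : z' ^+ 2 - 1 != 0. Proof. by rewrite -opprB oppr_eq0. Qed.
Lemma hq2 : q ^+ 2 != 1.
Proof. by apply: contra hq4 => /eqP e; rewrite (_ : 4 = 2 * 2)%N // exprM e expr1n. Qed.
Lemma hqi2 : q ^- 2 != 1.
Proof. by rewrite invr_eq1 hq2. Qed.
Lemma hqi4 : q ^- 2 * q ^- 2 != 1.
Proof. by rewrite -invfM -exprD invr_eq1. Qed.
Lemma hqq : q - q^-1 != 0.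
Proof.
apply: contra hq2 => /eqP e; apply/eqP.
have : q * (q - q^-1) = 0 by rewrite e mulr0.
by rewrite mulrBr mulfV // expr2 => /eqP; rewrite subr_eq0 => /eqP.
Qed.
Lemma hqm : q * q - 1 != 0. Proof. by rewrite subr_eq0 -expr2 hq2. Qed.
Lemma hzm : z * z - 1 != 0. Proof. by rewrite -expr2 z2. Qed.
Lemma hz'm : z' * z' - 1 != 0. Proof. by rewrite -expr2 z'2. Qed.
Lemma hkk : k * k' != 0. Proof. by rewrite mulf_neq0. Qed.
Lemma hkkq : k * k' * q ^- 2 != 0. Proof. by rewrite !mulf_neq0 // invr_eq0 expf_neq0. Qed.


Definition RRm (a b : C) := m4 [:: [:: a * 1 + b * (- z * z'); 0; 0; 0];
  [:: 0; a * 0 + b * (1 - z' ^+ 2); a * z' + b * (- z); 0];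
  [:: 0; a * z + b * (- z'); a * (1 - z ^+ 2) + b * 0; 0];
  [:: 0; 0; 0; a * (- z * z') + b * 1]].

Lemma RR'E (a b : C) : a *: Rmx z z' + b *: R'mx z z' = RRm a b.
Proof.
apply/matrixP => -[[|[|[|[|?]]]] ?] -[[|[|[|[|?]]]] ?] //; rewrite !mxE /=; ring.
Qed.

Ltac side := rewrite ?hz0 ?hz'0 ?hq0 ?hk0 ?hk'0 ?hqq ?z2 ?z'2 ?hqm ?hzm ?hz'm ?hz2 ?hz'2 //.

Lemma RRm_hom (a b : C) : is_hom q z k z' k' (RRm a b).
Proof.
case; rewrite /RRm ?rhoT_GE ?rhoT_GF ?rhoT_GK ?rhoT_GKi ?rhoT_GW ?rhoT_GWi !mulm4;
  congr (m4 [:: [:: _; _; _; _]; [:: _; _; _; _]; [:: _; _; _; _]; [:: _; _; _; _]]);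
  rewrite /qbr; try field; side.
Qed.
Lemma hom_RRm (p00 p01 p02 p03 p10 p11 p12 p13 p20 p21 p22 p23 p30 p31 p32 p33 : C) :
  is_hom q z k z' k' (m4 [:: [:: p00; p01; p02; p03]; [:: p10; p11; p12; p13]; [:: p20; p21; p22; p23]; [:: p30; p31; p32; p33]]) -> exists a b, m4 [:: [:: p00; p01; p02; p03]; [:: p10; p11; p12; p13]; [:: p20; p21; p22; p23]; [:: p30; p31; p32; p33]] = RRm a b.
Proof.
move=> H.
have n01 : k * k' != k * k' * q ^- 2 by case/andP: (neqt _ _ hkk hqi2).
have n10 : k * k' * q ^- 2 != k * k' by case/andP: (neqt _ _ hkk hqi2).
have n13 : k * k' * q ^- 2 != k * k' * q ^- 2 * q ^- 2 by case/andP: (neqt _ _ hkkq hqi2).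
have n31 : k * k' * q ^- 2 * q ^- 2 != k * k' * q ^- 2 by case/andP: (neqt _ _ hkkq hqi2).
have n03 : k * k' != k * k' * q ^- 2 * q ^- 2 by rewrite -mulrA; case/andP: (neqt _ _ hkk hqi4).
have n30 : k * k' * q ^- 2 * q ^- 2 != k * k' by rewrite -mulrA; case/andP: (neqt _ _ hkk hqi4).
move: (H GK); rewrite rhoT_GK rhoT_GK mulm4 mulm4 (mulrC k' k) => /m4_inj.
rewrite !mulr0 !mul0r !addr0 !add0r; move=> [k00 [k01 [k02 [k03 [k10 [k11 [k12 [k13 [k20 [k21 [k22 [k23 [k30 [k31 [k32 k33]]]]]]]]]]]]]]].
have {k01}z01 := wzero _ _ _ k01 n10.
have {k02}z02 := wzero _ _ _ k02 n10.
have {k03}z03 := wzero _ _ _ k03 n30.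
have {k10}z10 := wzero _ _ _ k10 n01.
have {k13}z13 := wzero _ _ _ k13 n31.
have {k20}z20 := wzero _ _ _ k20 n01.
have {k23}z23 := wzero _ _ _ k23 n31.
have {k30}z30 := wzero _ _ _ k30 n03.
have {k31}z31 := wzero _ _ _ k31 n13.
have {k32}z32 := wzero _ _ _ k32 n13.
move: (H GF); rewrite rhoT_GF rhoT_GF mulm4 mulm4 => /m4_inj; move=> [f00 [f01 [f02 [f03 [f10 [f11 [f12 [f13 [f20 [f21 [f22 [f23 [f30 [f31 [f32 f33]]]]]]]]]]]]]]].
move: (H GE); rewrite rhoT_GE rhoT_GE mulm4 mulm4 => /m4_inj; move=> [e00 [e01 [e02 [e03 [e10 [e11 [e12 [e13 [e20 [e21 [e22 [e23 [e30 [e31 [e32 e33]]]]]]]]]]]]]]].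
subst.
have eb2 : p21 = (p00 - p22) / z.
  apply: (lin_solve _ _ _ _ z hz0 f20); field; side.
have eb1 : p12 = z' * p00 - z * p11 by apply: (lin_solve _ _ _ _ 1 (oner_neq0 _) f10); ring.
have ea1 : p33 = p11 - z' * p21 by apply: (lin_solve _ _ _ _ 1 (oner_neq0 _) f31); ring.
rewrite eb2 in e01.
have ea2 : p00 = p22 / (1 - z ^+ 2) - z * z' * p11 / (1 - z' ^+ 2).
  apply: (lin_solve _ _ _ _ ((z' ^+ 2 - 1) * (z ^+ 2 - 1) / (z' * z ^+ 2 * (q - q^-1))) _ e01).
    by rewrite !mulf_eq0 invr_eq0 !mulf_eq0 ?expf_eq0 /= (negbTE z2) (negbTE z'2) (negbTE hz0) (negbTE hz'0) (negbTE hqq).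
  rewrite /qbr; field; side.
exists (p22 / (1 - z ^+ 2)), (p11 / (1 - z' ^+ 2)).
rewrite /RRm ea1 eb1 eb2 ea2.
congr (m4 [:: [:: _; _; _; _]; [:: _; _; _; _]; [:: _; _; _; _]; [:: _; _; _; _]]);
  try field; side.
Qed.
End Main.

Lemma m4E (M : 'M[C]_4) : M = m4 [:: [:: M (@Ordinal 4 0 isT) (@Ordinal 4 0 isT); M (@Ordinal 4 0 isT) (@Ordinal 4 1 isT); M (@Ordinal 4 0 isT) (@Ordinal 4 2 isT); M (@Ordinal 4 0 isT) (@Ordinal 4 3 isT)]; [:: M (@Ordinal 4 1 isT) (@Ordinal 4 0 isT); M (@Ordinal 4 1 isT) (@Ordinal 4 1 isT); M (@Ordinal 4 1 isT) (@Ordinal 4 2 isT); M (@Ordinal 4 1 isT) (@Ordinal 4 3 isT)]; [:: M (@Ordinal 4 2 isT) (@Ordinal 4 0 isT); M (@Ordinal 4 2 isT) (@Ordinal 4 1 isT); M (@Ordinal 4 2 isT) (@Ordinal 4 2 isT); M (@Ordinal 4 2 isT) (@Ordinal 4 3 isT)]; [:: M (@Ordinal 4 3 isT) (@Ordinal 4 0 isT); M (@Ordinal 4 3 isT) (@Ordinal 4 1 isT); M (@Ordinal 4 3 isT) (@Ordinal 4 2 isT); M (@Ordinal 4 3 isT) (@Ordinal 4 3 isT)]].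
Proof.
apply/matrixP => -[[|[|[|[|?]]]] ?] -[[|[|[|[|?]]]] ?] //; rewrite !mxE /=;
  by congr (M _ _); apply: val_inj.
Qed.
End Aux.

Lemma sq_ne (C : fieldType) (z : C) : z != 1 -> z != -1 -> 1 - z ^+ 2 != 0.
Proof.
move=> h1 h2; rewrite -(expr1n C 2) subr_sqr mulf_neq0 //.
  by rewrite subr_eq0 eq_sym.
by rewrite addrC addr_eq0.
Qed.

Local Open Scope complex_scope.

Theorem theorem4p3 (R : realType) (q z k z' k' : R[i])
  (hq0 : q != 0) (hq4 : q ^+ 4 != 1)
  (hz0 : z != 0) (hk0 : k != 0) (hz'0 : z' != 0) (hk'0 : k' != 0)
  (hz1 : z != 1) (hzm1 : z != -1) (hz'1 : z' != 1) (hz'm1 : z' != -1)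
  (hk4 : k ^+ 4 != 1) (hk'4 : k' ^+ 4 != 1) :
  (forall phi : 'M[R[i]]_4,
      is_hom q z k z' k' phi <->
      exists a b : R[i], phi = a *: Rmx z z' + b *: R'mx z z') /\
  (forall a b : R[i], a *: Rmx z z' + b *: R'mx z z' = 0 -> a = 0 /\ b = 0).
Proof.
have hz2 := @sq_ne _ _ hz1 hzm1.
have hz'2 := @sq_ne _ _ hz'1 hz'm1.
split.
  move=> phi; rewrite (@m4E _ phi); split.
    move=> H; have [a [b ->]] := @hom_RRm _ _ _ _ _ _ hq0 hq4 hz0 hk0 hz'0 hk'0 hz2 hz'2 _ _ _ _ _ _ _ _ _ _ _ _ _ _ _ _ H.
    by exists a, b; rewrite RR'E.
  move=> [a [b ->]]; rewrite RR'E; exact: RRm_hom.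
move=> a b; rewrite RR'E /RRm => /matrixP H.
move: (H (@Ordinal 4 1 isT) (@Ordinal 4 1 isT)) (H (@Ordinal 4 2 isT) (@Ordinal 4 2 isT)).
rewrite !mxE /= mulr0 add0r mulr0 addr0 => /eqP e1 /eqP e2.
move: e1 e2; rewrite !mulf_eq0 (negbTE hz2) (negbTE hz'2) !orbF => /eqP -> /eqP ->.
by [].
Qed.
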